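(* Let $G$ be a finite simple graph of order $p$ and size $q$ with $p\geq 4$ and $q\geq p+1$. Then $G$ contains either a cycle of even length or two edge-disjoint cycles of odd length. *)

(* Defs.v *)
(* A finite simple graph = finType T with a symmetric,
   irreflexive boolean adjacency relation e. *)
From mathcomp Require Import all_boot.
Set Implicit Arguments. Unset Strict Implicit. Unset Printing Implicit Defensive.

Section Graphs.
Variable T : finType.

Definition edge_set (e : rel T) : {set {set T}} :=
  [set E : {set T} | [exists x, exists y, e x y && (E == [set x; y])]].

Definition graph_size (e : rel T) : nat := #|edge_set e|.

Definition is_cycle (e : rel T) (s : seq T) : bool :=
  [&& uniq s, 2 < size s & cycle e s].

Definition cycle_length (s : seq T) : nat := size s.

Definition cycle_edges (s : seq T) : {set {set T}} :=
  [set [set x; next s x] | x in s].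

End Graphs.

(* Main.v *)
Require Import Defs.
From mathcomp Require Import all_boot zify.
From Stdlib Require Import Classical_Prop.
Set Implicit Arguments. Unset Strict Implicit. Unset Printing Implicit Defensive.
Lemma cyc_sorted (T : Type) (e : rel T) (x0 : T) s :
  sorted e s -> e (last x0 s) (head x0 s) -> cycle e s.
Proof. by case: s => [|y s] //= Hp He; rewrite rcons_path Hp. Qed.

Lemma sorted_cat2 (T : Type) (e : rel T) (x0 : T) a c :
  sorted e a -> sorted e c -> 0 < size a -> 0 < size c ->
  e (last x0 a) (head x0 c) -> sorted e (a ++ c).
Proof.
case: a => [|y a] //; case: c => [|z c] //= Ha Hc _ _ He.
by rewrite cat_path Ha /= He.
Qed.

Lemma last_ne (T : Type) (x y : T) s : 0 < size s -> last x s = last y s.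
Proof. by case: s. Qed.

Lemma head_ne (T : Type) (x y : T) s : 0 < size s -> head x s = head y s.
Proof. by case: s. Qed.

Lemma head_rev' (T : Type) (x : T) s : head x (rev s) = last x s.
Proof. by case/lastP: s => // s y; rewrite rev_rcons last_rcons. Qed.

Lemma last_rev' (T : Type) (x : T) s : last x (rev s) = head x s.
Proof. by case: s => //= y s; rewrite rev_cons last_rcons. Qed.

Definition seg (T : Type) (P : seq T) a b := drop a (take b.+1 P).

Lemma seg_size (T : Type) (P : seq T) a b :
  b < size P -> size (seg P a b) = b.+1 - a.
Proof. by move=> H; rewrite /seg size_drop size_takel. Qed.

Lemma seg_nth (T : Type) (x0 : T) (P : seq T) a b n :
  b < size P -> a + n <= b -> nth x0 (seg P a b) n = nth x0 P (a + n).
Proof. by move=> H1 H2; rewrite /seg nth_drop nth_take. Qed.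

Lemma seg_nil (T : Type) (P : seq T) a b :
  a <= b -> b < size P -> 0 < size (seg P a b).
Proof. by move=> H1 H2; rewrite seg_size //; lia. Qed.

Lemma seg_head (T : Type) (x0 : T) (P : seq T) a b :
  a <= b -> b < size P -> head x0 (seg P a b) = nth x0 P a.
Proof. by move=> H1 H2; rewrite -nth0 seg_nth ?addn0. Qed.

Lemma seg_last (T : Type) (x0 : T) (P : seq T) a b :
  a <= b -> b < size P -> last x0 (seg P a b) = nth x0 P b.
Proof.
move=> H1 H2; rewrite -nth_last seg_size // seg_nth //; first (congr nth; lia).
lia.
Qed.

Lemma seg_sorted (T : Type) (e : rel T) (P : seq T) a b :
  sorted e P -> sorted e (seg P a b).
Proof. by move=> H; apply/drop_sorted/take_sorted. Qed.

Lemma seg_uniq (T : eqType) (P : seq T) a b : uniq P -> uniq (seg P a b).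
Proof. by move=> H; apply/drop_uniq/take_uniq. Qed.

Lemma seg_mem (T : eqType) (P : seq T) a b z :
  uniq P -> b < size P -> z \in seg P a b ->
  [/\ z \in P, a <= index z P & index z P <= b].
Proof.
move=> U Hb /(nthP z) [i Hi Hz].
have Hs := seg_size a Hb; rewrite Hs in Hi.
rewrite seg_nth // in Hz; last lia.
have Hai : a + i < size P by lia.
rewrite -Hz index_uniq // mem_nth //; split => //; lia.
Qed.

Lemma sorted_rev_sym (T : Type) (e : rel T) s :
  symmetric e -> sorted e (rev s) = sorted e s.
Proof. by move=> S; rewrite rev_sorted; apply: eq_sorted => x y; rewrite S. Qed.

Definition Good (T : finType) (e : rel T) :=
  (exists s : seq T, is_cycle e s /\ ~~ odd (cycle_length s)) \/
  (exists s1 s2 : seq T,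
      [/\ is_cycle e s1, is_cycle e s2,
          odd (cycle_length s1), odd (cycle_length s2) &
          [disjoint cycle_edges s1 & cycle_edges s2]]).

Lemma good3 (T : finType) (e : rel T) s1 s2 s3 :
  is_cycle e s1 -> is_cycle e s2 -> is_cycle e s3 ->
  ~~ odd (size s1 + size s2 + size s3) -> Good e.
Proof.
move=> C1 C2 C3 Hs; left.
have [O1|O1] := boolP (odd (size s1)); last by exists s1.
have [O2|O2] := boolP (odd (size s2)); last by exists s2.
exists s3; split => //; move: Hs; rewrite !oddD O1 O2 /=.
by case: (odd (size s3)).
Qed.

Lemma cyc_disj (T : finType) (e : rel T) (e_irr : irreflexive e) s1 s2 c :
  is_cycle e s1 -> is_cycle e s2 ->
  (forall z, z \in s1 -> z \in s2 -> z = c) ->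
  [disjoint cycle_edges s1 & cycle_edges s2].
Proof.
move=> /and3P[_ _ C1] _ H.
rewrite -setI_eq0; apply/eqP/setP => E; rewrite !inE.
apply/negbTE/negP => /andP[/imsetP[x xs1 ->] /imsetP[y ys2 Exy]].
have nx1 : next s1 x \in s1 by rewrite mem_next.
have x2 : x \in s2.
  have : x \in [set x; next s1 x] by rewrite !inE eqxx.
  by rewrite Exy !inE => /orP[/eqP->|/eqP->] //; rewrite mem_next.
have n2 : next s1 x \in s2.
  have : next s1 x \in [set x; next s1 x] by rewrite !inE eqxx orbT.
  by rewrite Exy !inE => /orP[/eqP->|/eqP->] //; rewrite mem_next.
have := next_cycle C1 xs1.
by rewrite (H _ nx1 n2) (H _ xs1 x2) e_irr.
Qed.

Definition EV (T : finType) (e : rel T) (V : {set T}) :=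
  [set E in edge_set e | E \subset V].
Definition NB (T : finType) (e : rel T) (V : {set T}) x := [set y in V | e x y].

Lemma edgeP_ (T : finType) (e : rel T) E :
  reflect (exists x y, e x y /\ E = [set x; y]) (E \in edge_set e).
Proof.
rewrite /edge_set inE; apply: (iffP existsP) => [[x /existsP[y /andP[H /eqP->]]]|[x [y [H ->]]]].
  by exists x, y.
by exists x; apply/existsP; exists y; rewrite H eqxx.
Qed.

Lemma EV_del (T : finType) (e : rel T) (e_sym : symmetric e) V x :
  #|EV e V| <= #|EV e (V :\ x)| + #|NB e V x|.
Proof.
have S : EV e V \subset EV e (V :\ x) :|: [set [set x; y] | y in NB e V x].
  apply/subsetP => E; rewrite inE => /andP[/edgeP_[a [b [Hab ->]]] /subsetP HV].
  have aV : a \in V by apply: HV; rewrite !inE eqxx.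
  have bV : b \in V by apply: HV; rewrite !inE eqxx orbT.
  have [->|xa] := eqVneq x a.
    by apply/setUP; right; apply/imsetP; exists b => //; rewrite /NB inE bV.
  have [->|xb] := eqVneq x b.
    apply/setUP; right; apply/imsetP; exists a; first by rewrite /NB inE aV e_sym.
    by rewrite setUC.
  apply/setUP; left; rewrite inE; apply/andP; split.
    by apply/edgeP_; exists a, b.
  apply/subsetP => z; rewrite !inE => /orP[]/eqP->; rewrite ?aV ?bV andbT eq_sym //.
apply: leq_trans (subset_leq_card S) _.
rewrite cardsU; apply: leq_trans (leq_subr _ _) _.
by rewrite leq_add2l leq_imset_card.
Qed.

Lemma EV_cyc (T : finType) (e : rel T) (e_sym : symmetric e) (V : {set T}) P :
  uniq P ->
  (forall x, x \in P -> forall y, y \in V -> e x y ->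
      [set x; y] \in cycle_edges P) ->
  #|EV e V| <= #|EV e (V :\: [set z in P])| + size P.
Proof.
move=> U H.
have S : EV e V \subset EV e (V :\: [set z in P]) :|: cycle_edges P.
  apply/subsetP => E; rewrite inE => /andP[/edgeP_[a [b [Hab ->]]] /subsetP HV].
  have aV : a \in V by apply: HV; rewrite !inE eqxx.
  have bV : b \in V by apply: HV; rewrite !inE eqxx orbT.
  have [aP|aP] := boolP (a \in P); first by apply/setUP; right; apply: H.
  have [bP|bP] := boolP (b \in P).
    by apply/setUP; right; rewrite setUC; apply: H => //; rewrite e_sym.
  apply/setUP; left; rewrite inE; apply/andP; split.
    by apply/edgeP_; exists a, b.
  by apply/subsetP => z; rewrite !inE => /orP[]/eqP->; rewrite ?aV ?bV ?aP ?bP.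
apply: leq_trans (subset_leq_card S) _.
rewrite cardsU; apply: leq_trans (leq_subr _ _) _.
rewrite leq_add2l; apply: leq_trans (leq_imset_card _ _) _.
by rewrite (card_uniqP U).
Qed.
Definition lpath (T : finType) (e : rel T) (V : {set T}) (P : seq T) :=
  [&& uniq P, all (fun x => x \in V) P & sorted e P].

Lemma longest (T : finType) (e : rel T) (V : {set T}) :
  0 < #|V| -> exists P, [/\ lpath e V P, 0 < size P &
                           forall Q, lpath e V Q -> size Q <= size P].
Proof.
move=> /card_gt0P[x xV].
pose pr n := [exists t : n.-tuple T, lpath e V t].
have ex : exists n, pr n.
  by exists 1; apply/existsP; exists [tuple x]; rewrite /lpath /= xV.
have ub : forall n, pr n -> n <= #|T|.
  move=> n /existsP[t /and3P[U _ _]].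
  by rewrite -(size_tuple t) -(card_uniqP U) max_card.
case: (ex_maxnP ex ub) => n /existsP[t Ht] Hmax.
have H1 : 1 <= n.
  by apply: Hmax; apply/existsP; exists [tuple x]; rewrite /lpath /= xV.
exists t; split => //; first by rewrite size_tuple.
move=> Q HQ; rewrite size_tuple; apply: Hmax.
by apply/existsP; exists (in_tuple Q).
Qed.

Lemma seg_cycle (T : finType) (e : rel T) (e_sym : symmetric e) (x0 : T) P a b :
  sorted e P -> uniq P -> a.+1 < b -> b < size P ->
  e (nth x0 P b) (nth x0 P a) -> is_cycle e (seg P a b).
Proof.
move=> S U H1 H2 He; rewrite /is_cycle seg_uniq // seg_size //.
rewrite (_ : 2 < b.+1 - a) /=; last lia.
apply: (@cyc_sorted _ _ x0); first exact: seg_sorted.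
by rewrite seg_last ?seg_head //; lia.
Qed.

Lemma cons_seg_cycle (T : finType) (e : rel T) (x0 : T) P a b x :
  sorted e P -> uniq P -> x \notin seg P a b -> a < b -> b < size P ->
  e x (nth x0 P a) -> e (nth x0 P b) x -> is_cycle e (x :: seg P a b).
Proof.
move=> S U xn H1 H2 He1 He2; apply/and3P; split.
- by rewrite cons_uniq xn seg_uniq.
- by rewrite /= seg_size //; lia.
have Hs : 0 < size (seg P a b) by apply: seg_nil => //; lia.
apply: (@cyc_sorted _ _ x0).
  apply: (@sorted_cat2 _ _ x0 [:: x]) => //=; first exact: seg_sorted.
  by rewrite seg_head //; lia.
by rewrite /= (last_ne _ x0 Hs) seg_last //; lia.
Qed.

Lemma front (T : finType) (e : rel T) (e_sym : symmetric e) (e_irr : irreflexive e)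
  (V : {set T}) P (x0 : T) :
  lpath e V P -> 0 < size P -> (forall Q, lpath e V Q -> size Q <= size P) ->
  (forall x, x \in V -> 1 < #|NB e V x|) -> ~ Good e ->
  exists i, [/\ 1 < i < size P, e (nth x0 P 0) (nth x0 P i) &
     forall y, y \in V -> e (nth x0 P 0) y -> y = nth x0 P 1 \/ y = nth x0 P i].
Proof.
move=> /and3P[U A S] P0 Hmax Hdeg NG.
have v0V : nth x0 P 0 \in V by apply: (allP A); rewrite mem_nth.
have F1 : forall y, y \in V -> e (nth x0 P 0) y -> y \in P.
  move=> y yV Hy; apply/negPn/negP => yP.
  have L : lpath e V (y :: P).
    rewrite /lpath /= yP U yV A /=.
    by case: P S Hy {U A P0 Hmax v0V yP} => [|z P'] //= S Hy; rewrite e_sym Hy.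
  by have := Hmax _ L; rewrite /= ltnn.
have Hidx : forall y, y \in V -> e (nth x0 P 0) y ->
    [/\ 0 < index y P, index y P < size P & y = nth x0 P (index y P)].
  move=> y yV Hy; have yP := F1 y yV Hy.
  rewrite index_mem yP nth_index //; split => //.
  rewrite lt0n; apply/negP => /eqP H0.
  by move: Hy; rewrite -{1}(nth_index x0 yP) H0 e_irr.
have Theta : forall i l, 1 < i -> i < l -> l < size P ->
    e (nth x0 P 0) (nth x0 P i) -> e (nth x0 P 0) (nth x0 P l) -> False.
  move=> i l H1 H2 H3 E1 E2; apply: NG.
  apply: (@good3 _ e (seg P 0 i) (seg P 0 l) (nth x0 P 0 :: seg P i l)).
  - by apply: (@seg_cycle _ _ e_sym x0) => //; [lia | rewrite e_sym].
  - by apply: (@seg_cycle _ _ e_sym x0) => //; [lia | rewrite e_sym].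
  - apply: (@cons_seg_cycle _ _ x0) => //; last by rewrite e_sym.
    apply/negP => /(seg_mem U H3) [_ Hi _].
    by move: Hi; rewrite index_uniq //; lia.
  - rewrite /= !seg_size //; try lia.
have [y1 [y2 [H1 H2 Hne]]] := card_gt1P (Hdeg _ v0V).
rewrite /NB !inE in H1 H2.
case/andP: H1 => y1V E1; case/andP: H2 => y2V E2.
have [y [yV Ey Hy1]] : exists y, [/\ y \in V, e (nth x0 P 0) y & y != nth x0 P 1].
  have [Hy|Hy] := eqVneq y1 (nth x0 P 1); last by exists y1.
  by exists y2; split => //; rewrite -Hy eq_sym.
have [Hi0 Hi1 Hiy] := Hidx y yV Ey.
have Hi : 1 < index y P.
  rewrite ltn_neqAle Hi0 andbT; apply/negP => /eqP Hi.
  by move: Hy1; rewrite Hiy -Hi eqxx.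
exists (index y P); split; [by rewrite Hi Hi1 | by rewrite -Hiy |].
move=> z zV Ez; have [Hl0 Hl1 Hlz] := Hidx z zV Ez.
have [Hl|Hl] := eqVneq (index z P) 1; first by left; rewrite Hlz Hl.
have [Hl'|Hl'] := eqVneq (index z P) (index y P); first by right; rewrite Hlz Hl'.
exfalso.
have [Hlt|Hlt] := ltnP (index z P) (index y P).
  have Hz1 : 1 < index z P by rewrite ltn_neqAle eq_sym Hl Hl0.
  by apply: (Theta (index z P) (index y P) Hz1 Hlt Hi1); [rewrite -Hlz | rewrite -Hiy].
have Hlt' : index y P < index z P by rewrite ltn_neqAle eq_sym Hl' Hlt.
by apply: (Theta (index y P) (index z P) Hi Hlt' Hl1); [rewrite -Hiy | rewrite -Hlz].
Qed.

Lemma back (T : finType) (e : rel T) (e_sym : symmetric e) (e_irr : irreflexive e)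
  (V : {set T}) P (x0 : T) :
  lpath e V P -> 0 < size P -> (forall Q, lpath e V Q -> size Q <= size P) ->
  (forall x, x \in V -> 1 < #|NB e V x|) -> ~ Good e ->
  exists j, [/\ j.+2 < size P, e (nth x0 P (size P - 1)) (nth x0 P j) &
     forall y, y \in V -> e (nth x0 P (size P - 1)) y ->
        y = nth x0 P (size P - 2) \/ y = nth x0 P j].
Proof.
move=> LP P0 Hmax Hdeg NG.
have LR : lpath e V (rev P).
  by case/and3P: LP => U A S; rewrite /lpath rev_uniq all_rev sorted_rev_sym // U A S.
have R0 : 0 < size (rev P) by rewrite size_rev.
have Rmax : forall Q, lpath e V Q -> size Q <= size (rev P).
  by move=> Q /Hmax; rewrite size_rev.
have [i [/andP[Hi1 Hi2] Hei Hu]] := front e_sym e_irr x0 LR R0 Rmax Hdeg NG.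
rewrite size_rev in Hi2.
have E0 : nth x0 (rev P) 0 = nth x0 P (size P - 1) by rewrite nth_rev.
have E1 : nth x0 (rev P) 1 = nth x0 P (size P - 2) by rewrite nth_rev //; lia.
have Ei : nth x0 (rev P) i = nth x0 P (size P - i.+1) by rewrite nth_rev.
rewrite E0 Ei in Hei; rewrite E0 E1 Ei in Hu.
exists (size P - i.+1); split => //.
by move: Hi1 Hi2; clear; lia.
Qed.

Lemma EV_V0 (T : finType) (e : rel T) (V : {set T}) : 0 < #|EV e V| -> 0 < #|V|.
Proof.
move=> /card_gt0P[E]; rewrite inE => /andP[/edgeP_[a [b [_ ->]]] /subsetP H].
by apply/card_gt0P; exists a; apply: H; rewrite !inE eqxx.
Qed.

Lemma head_cat_ne (T : Type) (x0 : T) a c : 0 < size a -> head x0 (a ++ c) = head x0 a.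
Proof. by case: a. Qed.

Lemma main (T : finType) (e : rel T) (e_sym : symmetric e) (e_irr : irreflexive e) n :
  forall V : {set T}, #|V| <= n -> #|V| + 1 <= #|EV e V| -> Good e.
Proof.
elim: n => [|n IH] V HV HE; have HE0 : 0 < #|EV e V| by move: HE; clear; lia.
  by have := EV_V0 HE0; move: HV; clear; lia.
case: (classic (Good e)) => // NG; exfalso.
case: (pickP [pred x in V | #|NB e V x| <= 1]) => [x /= /andP[xV Hx] | Hall].
  apply: NG; apply: (IH (V :\ x)).
    by have := cardsD1 x V; rewrite xV; lia.
  by have := EV_del e_sym V x; have := cardsD1 x V; rewrite xV; lia.
have Hdeg : forall x, x \in V -> 1 < #|NB e V x|.
  by move=> x xV; have := Hall x; rewrite /= xV /= => /negbT; rewrite -ltnNge.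
have [P [LP P0 Hmax]] := longest e (EV_V0 HE0).
have [x0 _] : exists x0 : T, True by case: P P0 {LP Hmax} => [|z] //; exists z.
have [i [/andP[Hi1 Hi2] Hei Hu]] := front e_sym e_irr x0 LP P0 Hmax Hdeg NG.
have [j [Hj Hej Hv]] := back e_sym e_irr x0 LP P0 Hmax Hdeg NG.
case/and3P: (LP) => U A S.
have Hk : size P - 1 < size P by move: P0; clear; lia.
have [Hik|Hik] := eqVneq i (size P - 1).
  have CP : cycle e P.
    apply: (@cyc_sorted _ _ x0) S _.
    by rewrite -nth_last -nth0 -subn1 -Hik e_sym.
  have Hnb : forall x, x \in P -> forall y, y \in V -> e x y ->
      [set x; y] \in cycle_edges P.
    move=> x xP y yV Hxy.
    have QE := rot_index xP.
    set Q' := drop _ P ++ take _ P in QE.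
    have UQ : uniq (x :: Q') by rewrite -QE rot_uniq.
    have CQ : cycle e (x :: Q') by rewrite -QE rot_cycle.
    have LQ : lpath e V (x :: Q').
      apply/and3P; split => //.
        by apply/allP => z; rewrite -QE mem_rot => zP; exact: (allP A).
      by move: CQ; rewrite /= rcons_path => /andP[].
    have SQ : size (x :: Q') = size P by rewrite -QE size_rot.
    have Q0 : 0 < size (x :: Q') by [].
    have Qmax : forall R, lpath e V R -> size R <= size (x :: Q').
      by move=> R /Hmax; rewrite SQ.
    have [i' [/andP[Hi1' Hi2'] Hei' Hu']] := front e_sym e_irr x LQ Q0 Qmax Hdeg NG.
    have Lx : e (last x Q') x by move: CQ; rewrite /= rcons_path => /andP[].
    have LQm : last x Q' \in x :: Q' by rewrite mem_last.
    have LV : last x Q' \in V by apply: (allP A); rewrite -(mem_rot (index x P)) QE.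
    have EL : nth x (x :: Q') (size Q') = last x Q' := nth_last x (x :: Q').
    have HL : last x Q' = nth x (x :: Q') i'.
      have LxS : e (nth x (x :: Q') 0) (last x Q') by rewrite /= e_sym.
      have [HL1|//] := Hu' (last x Q') LV LxS.
      have Hs2 : 1 < size Q' by move: Hi1' Hi2' => /= ; clear; lia.
      exfalso; move: HL1 => /eqP; rewrite -EL nth_uniq //=; last by apply: ltn_trans Hs2 _.
      by move=> /eqP HQ; move: Hs2; rewrite HQ.
    have nxt : next P =1 next (x :: Q') by move=> z; rewrite -QE (next_rot _ U).
    case: (Hu' y yV Hxy) => Hy.
      have Ny : next P x = y.
        by rewrite nxt Hy next_nth mem_head /= eqxx.
      by rewrite -Ny; apply: imset_f.
    have yP : y \in P by rewrite -(mem_rot (index x P)) QE Hy -HL.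
    have Ny : next P y = x.
      rewrite nxt Hy -HL next_nth LQm (index_last UQ) nth_default //.
    by rewrite setUC -{1}Ny; apply: imset_f.
  have cP : #|[set z in P]| = size P.
    by rewrite -(card_uniqP U); apply: eq_card => z; rewrite inE.
  have HPV : [set z in P] \subset V.
    by apply/subsetP => z; rewrite inE; exact: (allP A).
  have HsP : size P <= #|V|.
    by have := subset_leq_card HPV; rewrite cP.
  apply: NG; apply: (IH (V :\: [set z in P])).
    by rewrite cardsDS // cP; move: HV P0; clear; lia.
  have HW : #|EV e V| <= #|EV e (V :\: [set z in P])| + size P.
    exact: (EV_cyc e_sym U Hnb).
  rewrite cardsDS // cP.
  by move: HE HsP HW; clear; lia.
have Hik' : i < size P - 1 by move: Hi2 Hik; clear; lia.
have CA : is_cycle e (seg P 0 i).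
  by apply: (@seg_cycle _ _ e_sym x0) => //; rewrite e_sym.
have CC : is_cycle e (seg P j (size P - 1)).
  by apply: (@seg_cycle _ _ e_sym x0) => //; move: Hj; clear; lia.
have [Hij|Hij] := leqP i j.
  apply: NG.
  have [OA|OA] := boolP (odd (size (seg P 0 i))); last by left; exists (seg P 0 i).
  have [OC|OC] := boolP (odd (size (seg P j (size P - 1)))); last first.
    by left; exists (seg P j (size P - 1)).
  right; exists (seg P 0 i), (seg P j (size P - 1)); split => //.
  apply: (cyc_disj e_irr (c := nth x0 P i)) CA CC _ => z.
  move=> /(seg_mem U Hi2) [zP _ H1] /(seg_mem U Hk) [_ H2 _].
  rewrite -(nth_index x0 zP); congr nth.
  by move: H1 H2 Hij; clear; lia.
apply: NG; apply: (good3 CA CC (s3 := seg P 0 j ++ rev (seg P i (size P - 1)))).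
  have Hjs : j < size P by move: Hj; clear; lia.
  apply/and3P; split.
  - rewrite cat_uniq seg_uniq // rev_uniq seg_uniq // andbT /=.
    apply/hasPn => z; rewrite mem_rev => /(seg_mem U Hk)[_ H1 _].
    by apply/negP => /(seg_mem U Hjs)[_ _ H2]; move: H1 H2 Hij; clear; lia.
  - by rewrite size_cat size_rev !seg_size //; move: Hik'; clear; lia.
  apply: (@cyc_sorted _ _ x0).
    apply: (@sorted_cat2 _ _ x0).
    + exact: seg_sorted.
    + by rewrite sorted_rev_sym //; exact: seg_sorted.
    + by rewrite seg_size.
    + by rewrite size_rev seg_size //; move: Hik'; clear; lia.
    + rewrite head_rev' !seg_last //; first by rewrite e_sym.
      by move: Hik'; clear; lia.
  rewrite last_cat (last_ne _ x0); last by rewrite size_rev seg_size //; move: Hik'; clear; lia.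
  rewrite last_rev' seg_head //; last by move: Hik'; clear; lia.
  by rewrite head_cat_ne ?seg_size // seg_head // e_sym.
by rewrite size_cat size_rev !seg_size //; move: Hik' Hij Hj; clear; lia.
Qed.

Unset Implicit Arguments.
Set Strict Implicit.

Theorem corollary8p4 (T : finType) (e : rel T)
  (e_sym : symmetric e) (e_irr : irreflexive e) :
  4 <= #|T| -> #|T| + 1 <= graph_size e ->
  (exists s : seq T, is_cycle e s /\ ~~ odd (cycle_length s)) \/
  (exists s1 s2 : seq T,
      [/\ is_cycle e s1, is_cycle e s2,
          odd (cycle_length s1), odd (cycle_length s2) &
          [disjoint cycle_edges s1 & cycle_edges s2]]).
Proof.
move=> _ H.
have EVT : EV e [set: T] = edge_set e.
  by apply/setP => E; rewrite inE subsetT andbT.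
apply: (@main T e e_sym e_irr #|T| [set: T]); first by rewrite cardsT.
by rewrite EVT cardsT.
Qed.
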